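(* $\mathrm{TC}(\mathbb{S}^1_3)=3$.
   Context: Finite spaces are finite $T_0$ spaces identified with finite posets ($x^\downarrow=\{y:y\le x\}$ is the minimal open neighborhood of $x$; open sets are the down-closed sets). $\mathbb{S}^1_3=\{x_0,x_1,x_2,y_0,y_1,y_2\}$ has minimal open sets $x_i^\downarrow=\{x_i\}$ and $y_i^\downarrow=\{y_i,x_i,x_{i-1\bmod 3}\}$. Topological complexity is unreduced: for path-connected $X$, with $\pi:X^I\to X\times X$, $\gamma\mapsto(\gamma(0),\gamma(1))$ ($X^I$ with compact-open topology), $\mathrm{TC}(X)$ is the minimal $k$ such that $X\times X$ is covered by $k$ open sets each admitting a continuous section of $\pi$. *)

(* Defs.v *)
From Stdlib Require Import Reals Lra List.
Open Scope R_scope.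

Record space := Space { pt :> Type; is_open : (pt -> Prop) -> Prop }.

Inductive gen_open {T : Type} (B : (T -> Prop) -> Prop) : (T -> Prop) -> Prop :=
| gen_base U : B U -> gen_open B U
| gen_full : gen_open B (fun _ => True)
| gen_inter U V : gen_open B U -> gen_open B V -> gen_open B (fun x => U x /\ V x)
| gen_union (F : (T -> Prop) -> Prop) :
    (forall U, F U -> gen_open B U) -> gen_open B (fun x => exists U, F U /\ U x)
| gen_ext U V : gen_open B U -> (forall x, U x <-> V x) -> gen_open B V.

Definition continuous (X Y : space) (f : X -> Y) : Prop :=
  forall V, is_open Y V -> is_open X (fun x => V (f x)).

Definition subspace (X : space) (P : X -> Prop) : space :=
  Space {x : X | P x}
    (fun U => exists V, is_open X V /\ forall z : {x : X | P x}, U z <-> V (proj1_sig z)).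

Definition prod_space (X Y : space) : space :=
  Space (X * Y)%type
    (gen_open (fun W =>
       (exists U, is_open X U /\ W = (fun p : X * Y => U (fst p))) \/
       (exists V, is_open Y V /\ W = (fun p : X * Y => V (snd p))))).

Definition R_space : space :=
  Space R (fun U => forall x, U x -> exists eps, 0 < eps /\
                     forall y, Rabs (y - x) < eps -> U y).

Definition unit_interval : space := subspace R_space (fun t => 0 <= t <= 1).

Definition I0 : unit_interval.
Proof. exists 0. simpl. lra. Defined.
Definition I1 : unit_interval.
Proof. exists 1. simpl. lra. Defined.

Definition compact (X : space) (K : X -> Prop) : Prop :=
  forall F : (X -> Prop) -> Prop,
    (forall U, F U -> is_open X U) ->
    (forall x, K x -> exists U, F U /\ U x) ->
    exists l : list (X -> Prop),
      (forall U, In U l -> F U) /\ (forall x, K x -> exists U, In U l /\ U x).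

Definition path_space (X : space) : space :=
  Space {g : unit_interval -> X | continuous unit_interval X g}
    (gen_open (fun W => exists (K : unit_interval -> Prop) (U : X -> Prop),
        compact unit_interval K /\ is_open X U /\
        W = (fun g : {g : unit_interval -> X | continuous unit_interval X g} =>
               forall t, K t -> U (proj1_sig g t)))).

Definition endpoints (X : space) (g : path_space X) : prod_space X X :=
  (proj1_sig g I0, proj1_sig g I1).

Definition has_section (X : space) (W : prod_space X X -> Prop) : Prop :=
  exists s : subspace (prod_space X X) W -> path_space X,
    continuous (subspace (prod_space X X) W) (path_space X) s /\
    forall w, endpoints X (s w) = proj1_sig w.

Definition motion_cover (X : space) (k : nat) : Prop :=
  exists W : nat -> (prod_space X X -> Prop),
    (forall i, (i < k)%nat -> is_open (prod_space X X) (W i) /\ has_section X (W i)) /\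
    (forall p : prod_space X X, exists i, (i < k)%nat /\ W i p).

(** (Unreduced) topological complexity: TC(X) = k iff k is minimal. *)
Definition TC_eq (X : space) (k : nat) : Prop :=
  motion_cover X k /\ forall j, (j < k)%nat -> ~ motion_cover X j.

Inductive S13 : Type := x0 | x1 | x2 | y0 | y1 | y2.

(** [S13_le b a] : b <= a, i.e. b lies in the minimal open set a^down. *)
Definition S13_le (b a : S13) : Prop :=
  match a with
  | x0 => b = x0
  | x1 => b = x1
  | x2 => b = x2
  | y0 => b = y0 \/ b = x0 \/ b = x2
  | y1 => b = y1 \/ b = x1 \/ b = x0
  | y2 => b = y2 \/ b = x2 \/ b = x1
  end.

(** Open sets of a finite T0 space = down-closed sets. *)
Definition S13_space : space :=
  Space S13 (fun U => forall a b, S13_le b a -> U a -> U b).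

(* Main.v *)
Require Import Defs.
From Stdlib Require Import Reals List.
From Stdlib Require Import Lra ZArith Lia Bool Classical ClassicalEpsilon ProofIrrelevance.
Import ListNotations.
Open Scope R_scope.

Definition sleb (b a : S13) : bool :=
  match a, b with
  | x0, x0 | x1, x1 | x2, x2 => true
  | y0, (y0 | x0 | x2) => true
  | y1, (y1 | x1 | x0) => true
  | y2, (y2 | x2 | x1) => true
  | _, _ => false
  end.

Lemma le_leb b a : S13_le b a <-> sleb b a = true.
Proof. destruct a, b; simpl; intuition congruence. Qed.

Lemma le_refl a : S13_le a a.
Proof. apply le_leb; destruct a; reflexivity. Qed.

Lemma le_trans a b c : S13_le a b -> S13_le b c -> S13_le a c.
Proof. rewrite !le_leb; destruct a, b, c; simpl; congruence. Qed.

Definition downP (D : S13 * S13 -> Prop) :=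
  forall p q, S13_le (fst q) (fst p) -> S13_le (snd q) (snd p) -> D p -> D q.

Lemma open_down (V : S13 * S13 -> Prop) :
  is_open (prod_space S13_space S13_space) V -> downP V.
Proof.
  simpl. intro H. induction H.
  - destruct H as [[U0 [HU ->]]|[U0 [HU ->]]]; intros p q h1 h2; simpl in *; intro; eapply HU; eauto.
  - intros p q; auto.
  - intros p q h1 h2 [a b]; split; [eapply IHgen_open1|eapply IHgen_open2]; eauto.
  - intros p q h1 h2 [U0 [hF hU]]. exists U0; split; auto. eapply H0; eauto.
  - intros p q h1 h2 h. apply H0. apply (IHgen_open p q h1 h2). apply H0; auto.
Qed.

Lemma down_open (D : S13 * S13 -> Prop) :
  downP D -> is_open (prod_space S13_space S13_space) D.
Proof.
  intro HD. simpl.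
  apply (gen_ext _ (fun x => exists U, (fun U => exists p, D p /\
     U = (fun q : S13*S13 => S13_le (fst q) (fst p) /\ S13_le (snd q) (snd p))) U /\ U x)).
  - apply gen_union. intros U [p [Dp ->]].
    apply (gen_inter _ (fun q : S13*S13 => S13_le (fst q) (fst p))
                       (fun q : S13*S13 => S13_le (snd q) (snd p))).
    + apply gen_base. left. exists (fun z => S13_le z (fst p)). split; [|reflexivity].
      simpl. intros a b h1 h2. eapply le_trans; eauto.
    + apply gen_base. right. exists (fun z => S13_le z (snd p)). split; [|reflexivity].
      simpl. intros a b h1 h2. eapply le_trans; eauto.
  - intros x; split.
    + intros [U [[p [Dp ->]] [h1 h2]]]. eapply HD; eauto.
    + intros Dx. exists (fun q : S13*S13 => S13_le (fst q) (fst x) /\ S13_le (snd q) (snd x)).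
      split; [exists x; split; auto| split; apply le_refl].
Qed.

Fixpoint zig (l : list (S13 * S13)) (last : S13) (r : R) : S13 :=
  match l with
  | nil => last
  | (P, Q) :: l' => if Req_EM_T r 0 then P else if Rlt_dec r 1 then Q else zig l' last (r - 1)
  end.

Definition hd_val (l : list (S13*S13)) (last : S13) :=
  match l with nil => last | (P, _) :: _ => P end.

Fixpoint valid (l : list (S13*S13)) (last : S13) : Prop :=
  match l with
  | nil => True
  | (P, Q) :: l' => S13_le Q P /\ S13_le Q (hd_val l' last) /\ valid l' last
  end.

Lemma zig_0 l last : zig l last 0 = hd_val l last.
Proof. destruct l as [|[P Q] l]; simpl; auto. destruct (Req_EM_T 0 0); congruence. Qed.

Definition downS (D : S13 -> Prop) := forall a b, S13_le b a -> D a -> D b.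

Lemma zig_open l last D : downS D -> valid l last -> forall r, D (zig l last r) ->
  exists eps, 0 < eps /\ forall r', Rabs (r' - r) < eps -> D (zig l last r').
Proof.
  intros HD. induction l as [|[P Q] l IH]; intros Hv r Hr.
  - exists 1; split; [lra|]. simpl; auto.
  - destruct Hv as [hQP [hQh Hv]]. simpl in Hr |- *.
    destruct (Req_EM_T r 0) as [e0|n0].
    + exists 1; split; [lra|]. intros r' hr'. subst r.
      destruct (Req_EM_T r' 0). auto. destruct (Rlt_dec r' 1).
      * apply (HD _ _ hQP); auto; try (eapply HD; eauto).
      * exfalso. rewrite Rminus_0_r in hr'. apply Rabs_def2 in hr'. lra.
    + destruct (Rlt_dec r 1) as [l1|nl1].
      * exists (Rmin (Rabs r) (1 - r)). split.
        { apply Rmin_glb_lt; [apply Rabs_pos_lt; auto| lra]. }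
        intros r' hr'. assert (hm1 := Rmin_l (Rabs r) (1 - r)). assert (hm2 := Rmin_r (Rabs r) (1 - r)).
        apply Rabs_def2 in hr'.
        destruct (Req_EM_T r' 0) as [e|].
        { exfalso. subst r'. destruct (Rle_dec 0 r).
          - rewrite Rabs_right in * by lra. lra.
          - rewrite Rabs_left in * by lra. lra. }
        destruct (Rlt_dec r' 1); [auto| exfalso; lra].
      * destruct (IH Hv (r - 1) Hr) as [e [he H]].
        destruct (Req_EM_T r 1) as [e1|n1].
        -- subst r. replace (1 - 1) with 0 in Hr by ring. rewrite zig_0 in Hr.
           exists (Rmin e 1). split; [apply Rmin_glb_lt; lra|].
           intros r' hr'. assert (hm1 := Rmin_l e 1). assert (hm2 := Rmin_r e 1).
           apply Rabs_def2 in hr'.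
           destruct (Req_EM_T r' 0); [exfalso; lra|].
           destruct (Rlt_dec r' 1); [exact (HD _ _ hQh Hr)|].
           apply H. apply Rabs_def1; lra.
        -- exists (Rmin e (r - 1)). split; [apply Rmin_glb_lt; lra|].
           intros r' hr'. assert (hm1 := Rmin_l e (r-1)). assert (hm2 := Rmin_r e (r-1)).
           apply Rabs_def2 in hr'.
           destruct (Req_EM_T r' 0); [exfalso; lra|].
           destruct (Rlt_dec r' 1); [exfalso; lra|].
           apply H. apply Rabs_def1; lra.
Qed.

Lemma zig_end l last : zig l last (INR (length l)) = last.
Proof.
  induction l as [|[P Q] l IH]; [reflexivity|].
  change (INR (length ((P,Q)::l))) with (INR (S (length l))). rewrite S_INR. cbn [zig].
  assert (h := pos_INR (length l)).
  destruct (Req_EM_T _ 0) as [e|]. { lra. }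
  destruct (Rlt_dec _ 1) as [r|]. { lra. }
  replace (INR (length l) + 1 - 1) with (INR (length l)) by ring. auto.
Qed.

Fixpoint le_list (l l' : list (S13*S13)) : Prop :=
  match l, l' with
  | nil, nil => True
  | (P,Q)::l, (P',Q')::l' => S13_le P P' /\ S13_le Q Q' /\ le_list l l'
  | _, _ => False
  end.

Lemma zig_mono l l' last last' r : le_list l l' -> S13_le last last' ->
  S13_le (zig l last r) (zig l' last' r).
Proof.
  revert l' r; induction l as [|[P Q] l IH]; intros [|[P' Q'] l'] r H Hl; simpl in *; try tauto.
  destruct H as [h1 [h2 h3]].
  destruct (Req_EM_T r 0); auto. destruct (Rlt_dec r 1); auto.
Qed.

Definition gpath (l : list (S13*S13)) (last : S13) (t : unit_interval) : S13 :=
  zig l last (INR (length l) * proj1_sig t).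

Lemma gpath_cont l last : valid l last -> continuous unit_interval S13_space (gpath l last).
Proof.
  intros Hv D HD. simpl in HD.
  exists (fun r => D (zig l last (INR (length l) * r))). split.
  - simpl. intros x Hx.
    destruct (zig_open l last D HD Hv _ Hx) as [e [he H]].
    assert (hn := pos_INR (length l)).
    exists (e / (INR (length l) + 1)). split.
    { apply Rdiv_lt_0_compat; lra. }
    intros y hy. apply H.
    replace (INR (length l) * y - INR (length l) * x) with (INR (length l) * (y - x)) by ring.
    rewrite Rabs_mult, (Rabs_right (INR _)) by lra.
    apply Rle_lt_trans with ((INR (length l) + 1) * Rabs (y - x)).
    + apply Rmult_le_compat_r; [apply Rabs_pos| lra].
    + apply Rmult_lt_reg_r with (/ (INR (length l) + 1)).
      { apply Rinv_0_lt_compat; lra. }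
      replace ((INR (length l) + 1) * Rabs (y - x) * / (INR (length l) + 1)) with (Rabs (y - x)) by (field; lra).
      exact hy.
  - intros z. unfold gpath. tauto.
Qed.

Lemma gpath_0 l last : gpath l last I0 = hd_val l last.
Proof. unfold gpath; simpl. rewrite Rmult_0_r. apply zig_0. Qed.

Lemma gpath_1 l last : gpath l last I1 = last.
Proof. unfold gpath; simpl. rewrite Rmult_1_r. apply zig_end. Qed.

Definition PS := prod_space S13_space S13_space.

Lemma mono_cont (W : S13*S13 -> Prop) (HW : downP W)
  (s : subspace PS W -> path_space S13_space) :
  (forall w w' : subspace PS W,
     S13_le (fst (proj1_sig w')) (fst (proj1_sig w)) ->
     S13_le (snd (proj1_sig w')) (snd (proj1_sig w)) ->
     forall t, S13_le (proj1_sig (s w') t) (proj1_sig (s w) t)) ->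
  continuous (subspace PS W) (path_space S13_space) s.
Proof.
  intros Hm V HV.
  assert (Hd : forall w w' : subspace PS W,
     S13_le (fst (proj1_sig w')) (fst (proj1_sig w)) ->
     S13_le (snd (proj1_sig w')) (snd (proj1_sig w)) -> V (s w) -> V (s w')).
  { simpl in HV. induction HV.
    - destruct H as [K [U1 [hK [hU ->]]]]. intros w w' h1 h2 hV t Kt.
      simpl in hU. eapply hU; [apply (Hm w w' h1 h2 t)| apply hV; auto].
    - auto.
    - intros w w' h1 h2 [a b]; split; eauto.
    - intros w w' h1 h2 [U0 [hF hU]]. exists U0; split; auto. eapply H0; eauto.
    - intros w w' h1 h2 h. apply H. eapply IHHV; eauto. apply H; auto. }
  exists (fun p => exists h : W p, V (s (exist _ p h))). split.
  - apply down_open. intros p q h1 h2 [h Vp].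
    exists (HW p q h1 h2 h). exact (Hd (exist _ p h) (exist _ q (HW p q h1 h2 h)) h1 h2 Vp).
  - intros [p h]; simpl; split.
    + intros Vp. exists h; auto.
    + intros [h' Vp]. exact (Hd (exist _ p h') (exist _ p h) (le_refl _) (le_refl _) Vp).
Qed.

Definition ye (k : nat) := match k with 0%nat => y0 | 1%nat => y1 | _ => y2 end.
Definition cen (k : nat) := match k with 0%nat => x1 | 1%nat => x2 | _ => x0 end.
Definition f1 (k : nat) (z : S13) :=
  match k, z with
  | 0%nat, x0 => y1 | 0%nat, x2 => y2
  | 1%nat, x1 => y2 | 1%nat, x0 => y0
  | S (S _), x2 => y0 | S (S _), x1 => y1
  | _, _ => z
  end.

Lemma F1 k z : z <> ye k -> S13_le z (f1 k z).
Proof. intros; apply le_leb; destruct k as [|[|k]], z; simpl in *; congruence. Qed.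
Lemma F2 k z : z <> ye k -> S13_le (cen k) (f1 k z).
Proof. intros; apply le_leb; destruct k as [|[|k]], z; simpl in *; congruence. Qed.
Lemma F3 k a a' : a <> ye k -> S13_le a' a -> S13_le (f1 k a') (f1 k a).
Proof. rewrite !le_leb; intros; destruct k as [|[|k]], a, a'; simpl in *; congruence. Qed.
Lemma F4 k a a' : S13_le a' a -> a' = ye k -> a = ye k.
Proof. rewrite le_leb; intros h ->; destruct k as [|[|k]], a; simpl in *; congruence. Qed.

Definition Wc (k : nat) (p : S13 * S13) : Prop := fst p <> ye k /\ snd p <> ye k.

Lemma Wc_down k : downP (Wc k).
Proof. intros p q h1 h2 [a b]; split; intro e; [apply a| apply b]; eapply F4; eauto. Qed.

Definition plist k (p : S13 * S13) :=
  [(fst p, fst p); (f1 k (fst p), cen k); (f1 k (snd p), snd p)].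

Lemma plist_valid k p : Wc k p -> valid (plist k p) (snd p).
Proof.
  intros [a b]. simpl. repeat split; try apply le_refl; try apply F1; try apply F2; auto.
Qed.

Definition sec k (w : subspace PS (Wc k)) : path_space S13_space :=
  exist _ (gpath (plist k (proj1_sig w)) (snd (proj1_sig w)))
          (gpath_cont _ _ (plist_valid k _ (proj2_sig w))).

Lemma sec_ok k : has_section S13_space (Wc k).
Proof.
  exists (sec k). split.
  - apply mono_cont; [apply Wc_down|].
    intros [p hp] [q hq] h1 h2 t. simpl in *. unfold gpath. simpl length.
    apply zig_mono; auto. destruct hp as [hp1 hp2].
    simpl. repeat split; auto using le_refl, F3.
  - intros [p hp]. unfold endpoints; simpl. rewrite gpath_0, gpath_1. simpl. destruct p; reflexivity.
Qed.

Lemma cover3 : motion_cover S13_space 3.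
Proof.
  exists Wc. split.
  - intros i _. split; [apply down_open, Wc_down| apply sec_ok].
  - intros [a b]. unfold Wc; simpl.
    destruct a, b;
    first [exists 0%nat; split; [lia| simpl; split; discriminate]
          | exists 1%nat; split; [lia| simpl; split; discriminate]
          | exists 2%nat; split; [lia| simpl; split; discriminate]].
Qed.

Definition posz (a : S13) : Z :=
  match a with x0 => 0 | y0 => 1 | x2 => 2 | y2 => 3 | x1 => 4 | y1 => 5 end%Z.
Definition step (a b : S13) : Z :=
  let d := Z.modulo (posz b - posz a) 6 in
  if Z.eqb d 1 then 1%Z else if Z.eqb d 5 then (-1)%Z else 0%Z.
Definition cmpb a b := orb (sleb a b) (sleb b a).

Lemma square a b a' b' : sleb a a' = true -> sleb b b' = true -> cmpb a b = true ->
  cmpb a' b' = true -> (step a b + step b b' = step a a' + step a' b')%Z.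
Proof. intros; destruct a, b, a', b'; simpl in *; try discriminate; reflexivity. Qed.

Definition wind6 v0 v1 v2 v3 v4 v5 : Z :=
  (step v0 v1 + step v1 v2 + step v2 v3 + step v3 v4 + step v4 v5 + step v5 v0)%Z.

Lemma eq_I (u v : unit_interval) : proj1_sig u = proj1_sig v -> u = v.
Proof. destruct u, v; simpl; intros ->; f_equal; apply proof_irrelevance. Qed.

Lemma conn (F : unit_interval -> Z) :
  (forall t, exists eps, 0 < eps /\ forall u : unit_interval,
      Rabs (proj1_sig u - proj1_sig t) < eps -> F u = F t) -> F I1 = F I0.
Proof.
  intros Hl.
  set (E := fun x => 0 <= x <= 1 /\ forall u : unit_interval, proj1_sig u <= x -> F u = F I0).
  assert (Hb : bound E). { exists 1. intros x [h _]; lra. }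
  assert (He : exists x, E x).
  { exists 0. split; [lra|]. intros u hu. f_equal. apply eq_I.
    destruct u as [u hu']; simpl in *. lra. }
  destruct (completeness E Hb He) as [m [Hub Hlub]].
  assert (hm0 : 0 <= m). { apply Hub. destruct He as [x Ex]. unfold E. split; [lra|].
    intros u hu. f_equal. apply eq_I. destruct u as [u hu']; simpl in *. lra. }
  assert (hm1 : m <= 1). { apply Hlub. intros x [h _]; lra. }
  set (tm := exist (fun x => 0 <= x <= 1) m (conj hm0 hm1) : unit_interval).
  destruct (Hl tm) as [eps [heps Heps]].
  destruct (classic (exists x, E x /\ m - eps < x)) as [[x [Ex hx]]|hn].
  2:{ exfalso. assert (m <= m - eps); [|lra]. apply Hlub. intros x Ex.
      apply Rnot_lt_le. intro h. apply hn. exists x; auto. }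
  assert (hxm : x <= m) by (apply Hub; auto).
  destruct Ex as [hx01 HEx].
  assert (Htm : F tm = F I0).
  { set (ux := exist (fun x => 0 <= x <= 1) x hx01 : unit_interval).
    rewrite <- (HEx ux) by (simpl; lra). symmetry. apply Heps. simpl.
    apply Rabs_def1; lra. }
  assert (Ez : E (Rmin 1 (m + eps / 2))).
  { split. { split; [apply Rmin_glb; lra| apply Rmin_l]. }
    intros u hu. destruct (Rle_dec (proj1_sig u) x) as [h|h]; [apply HEx; auto|].
    rewrite <- Htm. apply Heps. assert (hh := Rmin_r 1 (m + eps/2)).
    apply Rnot_le_lt in h. change (proj1_sig tm) with m. apply Rabs_def1; lra. }
  assert (hz := Hub _ Ez).
  assert (h1 : m = 1).
  { unfold Rmin in hz. destruct (Rle_dec 1 (m + eps / 2)); lra. }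
  rewrite <- Htm. apply Heps. simpl. rewrite h1. rewrite Rminus_diag, Rabs_R0. auto.
Qed.

Definition leP (p q : S13 * S13) := S13_le (fst p) (fst q) /\ S13_le (snd p) (snd q).

Lemma sec_mono (W : S13 * S13 -> Prop) (s : subspace PS W -> path_space S13_space) :
  continuous (subspace PS W) (path_space S13_space) s ->
  forall w w' : subspace PS W, leP (proj1_sig w') (proj1_sig w) ->
  forall t, S13_le (proj1_sig (s w') t) (proj1_sig (s w) t).
Proof.
  intros Hc w w' [h1 h2] t.
  set (z := proj1_sig (s w) t).
  set (O := fun g : path_space S13_space =>
              forall u, (fun u => u = t) u -> (fun v => S13_le v z) (proj1_sig g u)).
  assert (HO : is_open (path_space S13_space) O).
  { simpl. apply gen_base. exists (fun u => u = t), (fun v => S13_le v z).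
    split; [|split; [|reflexivity]].
    - intros Fm HF Hcov. destruct (Hcov t eq_refl) as [U [hU hUt]].
      exists [U]. split.
      + intros U' [<-|[]]; auto.
      + intros x ->. exists U; split; [left|]; auto.
    - simpl. intros a b hb ha. eapply le_trans; eauto. }
  destruct (Hc O HO) as [V [HVo HVe]].
  assert (HVd := open_down V HVo).
  assert (Vw : V (proj1_sig w)). { apply HVe. intros u ->. apply le_refl. }
  assert (Vw' : V (proj1_sig w')) by (eapply HVd; eauto).
  apply HVe in Vw'. apply Vw'. reflexivity.
Qed.

Lemma nbhd (g : path_space S13_space) (t : unit_interval) :
  exists eps, 0 < eps /\ forall u : unit_interval,
    Rabs (proj1_sig u - proj1_sig t) < eps -> S13_le (proj1_sig g u) (proj1_sig g t).
Proof.
  destruct g as [g gc]. simpl.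
  destruct (gc (fun v => S13_le v (g t))) as [V [HVo HVe]].
  { simpl. intros a b hb ha. eapply le_trans; eauto. }
  destruct (HVo (proj1_sig t)) as [eps [he H]]. { apply HVe. apply le_refl. }
  exists eps. split; auto. intros u hu. apply HVe. apply H. auto.
Qed.

Lemma nbhd_and (t : unit_interval) (P Q : unit_interval -> Prop) :
  (exists e, 0 < e /\ forall u : unit_interval, Rabs (proj1_sig u - proj1_sig t) < e -> P u) ->
  (exists e, 0 < e /\ forall u : unit_interval, Rabs (proj1_sig u - proj1_sig t) < e -> Q u) ->
  (exists e, 0 < e /\ forall u : unit_interval, Rabs (proj1_sig u - proj1_sig t) < e -> P u /\ Q u).
Proof.
  intros [e1 [h1 H1]] [e2 [h2 H2]]. exists (Rmin e1 e2). split; [apply Rmin_glb_lt; auto|].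
  intros u hu. split; [apply H1| apply H2]; eapply Rlt_le_trans; eauto; [apply Rmin_l|apply Rmin_r].
Qed.

Definition cmpP p q := leP p q \/ leP q p.

Lemma cmp_t (W : S13 * S13 -> Prop) (s : subspace PS W -> path_space S13_space) :
  continuous (subspace PS W) (path_space S13_space) s ->
  forall w w' : subspace PS W, cmpP (proj1_sig w) (proj1_sig w') ->
  forall t, cmpb (proj1_sig (s w) t) (proj1_sig (s w') t) = true.
Proof.
  intros Hc w w' [h|h] t; unfold cmpb; apply Bool.orb_true_iff.
  - left. apply le_leb. apply (sec_mono W s Hc w' w h).
  - right. apply le_leb. apply (sec_mono W s Hc w w' h).
Qed.

Lemma sec_loop (W : S13 * S13 -> Prop) : has_section S13_space W ->
  forall p0 p1 p2 p3 p4 p5, W p0 -> W p1 -> W p2 -> W p3 -> W p4 -> W p5 ->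
  cmpP p0 p1 -> cmpP p1 p2 -> cmpP p2 p3 -> cmpP p3 p4 -> cmpP p4 p5 -> cmpP p5 p0 ->
  wind6 (fst p0) (fst p1) (fst p2) (fst p3) (fst p4) (fst p5) =
  wind6 (snd p0) (snd p1) (snd p2) (snd p3) (snd p4) (snd p5).
Proof.
  intros [s [Hc He]] p0 p1 p2 p3 p4 p5 h0 h1 h2 h3 h4 h5 c0 c1 c2 c3 c4 c5.
  set (w0 := exist W p0 h0 : subspace PS W).
  set (w1 := exist W p1 h1 : subspace PS W).
  set (w2 := exist W p2 h2 : subspace PS W).
  set (w3 := exist W p3 h3 : subspace PS W).
  set (w4 := exist W p4 h4 : subspace PS W).
  set (w5 := exist W p5 h5 : subspace PS W).
  set (F := fun u => wind6 (proj1_sig (s w0) u) (proj1_sig (s w1) u) (proj1_sig (s w2) u)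
                           (proj1_sig (s w3) u) (proj1_sig (s w4) u) (proj1_sig (s w5) u)).
  assert (E0 : forall w : subspace PS W, proj1_sig (s w) I0 = fst (proj1_sig w)).
  { intros w. change (proj1_sig (s w) I0) with (fst (endpoints S13_space (s w))). rewrite He. reflexivity. }
  assert (E1 : forall w : subspace PS W, proj1_sig (s w) I1 = snd (proj1_sig w)).
  { intros w. change (proj1_sig (s w) I1) with (snd (endpoints S13_space (s w))). rewrite He. reflexivity. }
  assert (HF : F I1 = F I0).
  { apply conn. intros t.
    destruct (nbhd_and t _ _ (nbhd (s w0) t) (nbhd_and t _ _ (nbhd (s w1) t)
      (nbhd_and t _ _ (nbhd (s w2) t) (nbhd_and t _ _ (nbhd (s w3) t)
      (nbhd_and t _ _ (nbhd (s w4) t) (nbhd (s w5) t))))))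
      as [e [he H]].
    exists e; split; auto. intros u hu.
    destruct (H u hu) as [l0 [l1 [l2 [l3 [l4 l5]]]]].
    apply le_leb in l0, l1, l2, l3, l4, l5.
    assert (k0 := cmp_t W s Hc w0 w1 c0). assert (k1 := cmp_t W s Hc w1 w2 c1).
    assert (k2 := cmp_t W s Hc w2 w3 c2). assert (k3 := cmp_t W s Hc w3 w4 c3).
    assert (k4 := cmp_t W s Hc w4 w5 c4). assert (k5 := cmp_t W s Hc w5 w0 c5).
    assert (q0 := square _ _ _ _ l0 l1 (k0 u) (k0 t)).
    assert (q1 := square _ _ _ _ l1 l2 (k1 u) (k1 t)).
    assert (q2 := square _ _ _ _ l2 l3 (k2 u) (k2 t)).
    assert (q3 := square _ _ _ _ l3 l4 (k3 u) (k3 t)).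
    assert (q4 := square _ _ _ _ l4 l5 (k4 u) (k4 t)).
    assert (q5 := square _ _ _ _ l5 l0 (k5 u) (k5 t)).
    unfold F, wind6. lia. }
  unfold F in HF. rewrite !E0, !E1 in HF. simpl in HF. auto.
Qed.
Definition cands : list (list (S13*S13)) := [
  [(y0,y0); (y0,x0); (y0,y1); (y0,x1); (y0,y2); (y0,x2)];
  [(y0,y0); (y0,x0); (y0,y1); (x0,x1); (y1,y2); (x0,x2)];
  [(y0,y0); (y0,x0); (y0,y1); (x2,x1); (y2,y2); (x2,x2)];
  [(y0,y0); (y0,x2); (y0,y2); (x0,x1); (y1,y1); (x0,x0)];
  [(y0,y0); (y0,x2); (y0,y2); (x2,x1); (y2,y1); (x2,x0)];
  [(y0,y0); (x0,y0); (y1,y0); (x1,y0); (y2,y0); (x2,y0)];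
  [(y0,y0); (x0,y0); (y1,y0); (x1,x0); (y2,y1); (x2,x0)];
  [(y0,y0); (x0,y0); (y1,y0); (x1,x2); (y2,y2); (x2,x2)];
  [(y0,y0); (x0,x0); (y1,y1); (y1,x1); (y1,y2); (x0,x2)];
  [(y0,y0); (x0,x0); (y1,y1); (x1,x0); (y2,y0); (x2,y0)];
  [(y0,y0); (x0,x0); (y1,y1); (x1,y1); (y2,y1); (x2,x0)];
  [(y0,y0); (x0,x2); (y1,y2); (x1,x2); (y2,y0); (x2,y0)];
  [(y0,y0); (x0,x2); (y1,y2); (x1,x1); (y2,y1); (x2,x0)];
  [(y0,y0); (x0,x2); (y1,y2); (x1,y2); (y2,y2); (x2,x2)];
  [(y0,y0); (x2,x0); (y2,y1); (y2,x1); (y2,y2); (x2,x2)];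
  [(y0,y1); (y0,x1); (y0,y2); (x0,x2); (y1,y0); (x0,x0)];
  [(y0,y1); (y0,x1); (y0,y2); (x2,x2); (y2,y0); (x2,x0)];
  [(y0,y1); (x0,x0); (y1,y0); (y1,x2); (y1,y2); (x0,x1)];
  [(y0,y1); (x0,x0); (y1,y0); (x1,y0); (y2,y0); (x2,x0)];
  [(y0,y1); (x0,x0); (y1,y0); (x1,x0); (y2,y1); (x2,y1)];
  [(y0,y1); (x0,x0); (y1,y0); (x1,x2); (y2,y2); (x2,x1)];
  [(y0,y1); (x0,y1); (y1,y1); (x1,x0); (y2,y0); (x2,x0)];
  [(y0,y1); (x0,y1); (y1,y1); (x1,y1); (y2,y1); (x2,y1)];
  [(y0,y1); (x0,y1); (y1,y1); (x1,x1); (y2,y2); (x2,x1)];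
  [(y0,y1); (x0,x1); (y1,y2); (x1,x1); (y2,y1); (x2,y1)];
  [(y0,y1); (x0,x1); (y1,y2); (x1,y2); (y2,y2); (x2,x1)];
  [(y0,y1); (x2,x0); (y2,y0); (y2,x2); (y2,y2); (x2,x1)];
  [(y0,y2); (x0,x2); (y1,y0); (y1,x0); (y1,y1); (x0,x1)];
  [(y0,y2); (x0,x2); (y1,y0); (x1,y0); (y2,y0); (x2,x2)];
  [(y0,y2); (x0,x2); (y1,y0); (x1,x2); (y2,y2); (x2,y2)];
  [(y0,y2); (x0,x1); (y1,y1); (x1,x0); (y2,y0); (x2,x2)];
  [(y0,y2); (x0,x1); (y1,y1); (x1,y1); (y2,y1); (x2,x1)];
  [(y0,y2); (x0,x1); (y1,y1); (x1,x1); (y2,y2); (x2,y2)];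
  [(y0,y2); (x0,y2); (y1,y2); (x1,x2); (y2,y0); (x2,x2)];
  [(y0,y2); (x0,y2); (y1,y2); (x1,x1); (y2,y1); (x2,x1)];
  [(y0,y2); (x0,y2); (y1,y2); (x1,y2); (y2,y2); (x2,y2)];
  [(y0,y2); (x2,x2); (y2,y0); (y2,x0); (y2,y1); (x2,x1)];
  [(y1,y0); (y1,x0); (y1,y1); (y1,x1); (y1,y2); (y1,x2)];
  [(y1,y0); (y1,x0); (y1,y1); (x1,x1); (y2,y2); (x1,x2)];
  [(y1,y0); (y1,x2); (y1,y2); (x1,x1); (y2,y1); (x1,x0)];
  [(y1,y0); (x1,x0); (y2,y1); (y2,x1); (y2,y2); (x1,x2)];
  [(y1,y1); (y1,x1); (y1,y2); (x1,x2); (y2,y0); (x1,x0)];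
  [(y1,y1); (x1,x0); (y2,y0); (y2,x2); (y2,y2); (x1,x1)];
  [(y1,y2); (x1,x2); (y2,y0); (y2,x0); (y2,y1); (x1,x1)];
  [(y2,y0); (y2,x0); (y2,y1); (y2,x1); (y2,y2); (y2,x2)]].

Definition lePb (p q : S13 * S13) := sleb (fst p) (fst q) && sleb (snd p) (snd q).

Definition checkb (c : list (S13 * S13)) : bool :=
  match c with
  | [p0; p1; p2; p3; p4; p5] =>
    lePb p1 p0 && lePb p1 p2 && lePb p3 p2 && lePb p3 p4 && lePb p5 p4 && lePb p5 p0 &&
    negb (Z.eqb (wind6 (fst p0) (fst p1) (fst p2) (fst p3) (fst p4) (fst p5))
                (wind6 (snd p0) (snd p1) (snd p2) (snd p3) (snd p4) (snd p5)))
  | _ => false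
  end.

Definition colok (col : S13 * S13 -> bool) (c : list (S13 * S13)) : bool :=
  match c with
  | [p0; _; p2; _; p4; _] => Bool.eqb (col p0) (col p2) && Bool.eqb (col p2) (col p4)
  | _ => false
  end.

Definition find col := existsb (fun c => checkb c && colok col c) cands.

Lemma find_all col : find col = true.
Proof.
  unfold find, cands. simpl.
  destruct (col (y0,y0)), (col (y0,y1)), (col (y0,y2)), (col (y1,y0)), (col (y1,y1)),
    (col (y1,y2)), (col (y2,y0)), (col (y2,y1)), (col (y2,y2)); reflexivity.
Qed.

Lemma lePb_leP p q : lePb p q = true -> leP p q.
Proof. unfold lePb, leP. rewrite andb_true_iff, !le_leb. tauto. Qed.

Lemma no_cover2 : ~ motion_cover S13_space 2.
Proof.
  intros [W [Hop Hcov]].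
  set (col := fun p => if excluded_middle_informative (W 0%nat p) then true else false).
  assert (Hc1 : forall p, col p = true -> W 0%nat p).
  { intros p. unfold col. destruct (excluded_middle_informative _); auto; discriminate. }
  assert (Hc2 : forall p, col p = false -> W 1%nat p).
  { intros p. unfold col. destruct (excluded_middle_informative _) as [h|h]; [discriminate|].
    intros _. destruct (Hcov p) as [i [hi Hi]]. destruct i as [|[|i]]; auto; [contradiction|lia]. }
  assert (Hf := find_all col). unfold find in Hf. apply existsb_exists in Hf.
  destruct Hf as [c [_ Hc]]. apply andb_true_iff in Hc. destruct Hc as [Hk Hco].
  destruct c as [|p0 [|p1 [|p2 [|p3 [|p4 [|p5 [|? ?]]]]]]]; try discriminate.
  cbn [checkb colok] in Hk, Hco. repeat rewrite andb_true_iff in Hk; rewrite andb_true_iff in Hco.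
  destruct Hk as [[[[[[l10 l12] l32] l34] l54] l50] hw].
  apply lePb_leP in l10, l12, l32, l34, l54, l50.
  destruct Hco as [e02 e24]. apply eqb_prop in e02, e24.
  assert (H : exists k, (k < 2)%nat /\ W k p0 /\ W k p2 /\ W k p4).
  { destruct (col p0) eqn:E.
    - exists 0%nat. split; [lia|]. rewrite <- e02 in e24. repeat split; apply Hc1; congruence.
    - exists 1%nat. split; [lia|]. rewrite <- e02 in e24. repeat split; apply Hc2; congruence. }
  destruct H as [k [hk [w0 [w2 w4]]]].
  destruct (Hop k hk) as [Ho Hs].
  assert (Hd := open_down _ Ho).
  assert (w1 : W k p1) by (destruct l10; eapply Hd; eauto).
  assert (w3 : W k p3) by (destruct l32; eapply Hd; eauto).
  assert (w5 : W k p5) by (destruct l50; eapply Hd; eauto).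
  assert (Heq := sec_loop (W k) Hs p0 p1 p2 p3 p4 p5 w0 w1 w2 w3 w4 w5
     (or_intror l10) (or_introl l12) (or_intror l32) (or_introl l34) (or_intror l54) (or_introl l50)).
  rewrite Heq, Z.eqb_refl in hw. discriminate.
Qed.

Theorem corollary6 : TC_eq S13_space 3.
Proof.
  split; [apply cover3|].
  intros j hj. destruct j as [|[|[|j]]]; try lia.
  - intros [W [_ Hcov]]. destruct (Hcov (x0, x0)) as [i [hi _]]. lia.
  - intros [W [Hop Hcov]]. apply no_cover2. exists (fun _ => W 0%nat). split.
    + intros i hi. apply Hop. lia.
    + intros p. destruct (Hcov p) as [i [hi Hi]]. exists 0%nat. split; [lia|].
      assert (i = 0%nat) by lia. subst; auto.
  - apply no_cover2.
Qed.
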